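(* Let $\vdash\subseteq Sqt$ satisfy (A), (Mon), (Cut), (Com), ($\bot$), ($\wedge$I), ($\wedge$E), ($\to$0), ($\to$1), ($\to$2). Then: (1) if $\vdash$ satisfies (Prop$^-$), $\mathfrak M^c_\vdash\in\mathcal D_{P-}$; (2) if $\vdash$ satisfies (Tran) and (Prop$_{tr}$), $\mathfrak M^c_\vdash\in\mathcal D_{\mathbf V}$; (3) if $\vdash$ satisfies (Sym1), (Sym2), (Prop$_{sy}$), $\mathfrak M^c_\vdash\in\mathcal D_{\mathbf B^p}$; (4) if $\vdash$ satisfies (Refl), (Sym1), (Sym2), (Prop$_{sy}$), $\mathfrak M^c_\vdash\in\mathcal D_{\mathbf O}$; (5) if $\vdash$ satisfies (Tran), (Sym1), (Sym2), (Prop$_{tr}$), $\mathfrak M^c_\vdash\in\mathcal D_{\mathbf{KB4}^p}$; (6) if $\vdash$ satisfies (Refl), (Tran), (Prop$_{tr}$), $\mathfrak M^c_\vdash\in\mathcal D_{\mathbf I}$; (7) if $\vdash$ satisfies (Refl), (Sym1), (Sym2), (Tran), (Prop$_{tr}$), $\mathfrak M^c_\vdash\in\mathcal D_{\mathbf C}$.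
   Context: $Form$: $\varphi::=p\mid\bot\mid(\varphi\wedge\varphi)\mid(\varphi\to\varphi)$ over a countable set $P0$ ($\wedge$ left-associative, binds tighter than $\to$). A model is $(W,R,V)$, $W\neq\emptyset$, $R\subseteq W\times W$, $V:P0\to\wp(W)$. For $X\subseteq W$: $-X=W\setminus X$, $R[X]=\{t:\exists s\in X,\ sRt\}$, $R^\Box(X)=\{s:\forall t\,(sRt\Rightarrow t\in X)\}$. A proposition of $(W,R)$ is $X\subseteq W$ with $R[X]\cap R^\Box(R[X])\subseteq X$; an interpretation is a model with every $V(p)$ a proposition. $\mathcal D_{P-}$: models with $V(p)\subseteq R^\Box(-R^\Box(\emptyset)\cup V(p))$ for all $p$; $\mathcal D_{\mathbf B^p}$, $\mathcal D_{\mathbf V}$, $\mathcal D_{\mathbf{KB4}^p}$, $\mathcal D_{\mathbf I}$, $\mathcal D_{\mathbf O}$, $\mathcal D_{\mathbf C}$: interpretations whose relation is respectively symmetric; transitive; symmetric and transitive; reflexive and transitive; reflexive and symmetric; reflexive, symmetric and transitive. Sequents: $(\Gamma,\varphi)$ with $\Gamma\subseteq Form$; $\Gamma\vdash\varphi$ means $(\Gamma,\varphi)\in\vdash$; $\psi\vdash\varphi$ means $\{\psi\}\vdash\varphi$; $\vdash\varphi$ means $\emptyset\vdash\varphi$. Rules (all $\Gamma,\Delta\subseteq Form$, $p\in P0$, formulas): (A) $\Gamma\cup\{\varphi\}\vdash\varphi$; (Mon) $\Gamma\subseteq\Delta$, $\Gamma\vdash\varphi\Rightarrow\Delta\vdash\varphi$;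 (Cut) $\Gamma\cup\{\psi\}\vdash\varphi$, $\Delta\vdash\psi\Rightarrow\Gamma\cup\Delta\vdash\varphi$; (Com) $\Gamma\vdash\varphi\Rightarrow\Gamma'\vdash\varphi$ for a finite $\Gamma'\subseteq\Gamma$; ($\bot$) $\bot\vdash\varphi$; ($\wedge$I) $\{\varphi,\psi\}\vdash\varphi\wedge\psi$; ($\wedge$E) $\varphi\wedge\psi\vdash\varphi$, $\varphi\wedge\psi\vdash\psi$; ($\to$0) $\vdash\varphi\to\varphi$; ($\to$1) $\Gamma\vdash\varphi\Rightarrow\{\psi\to\chi:\chi\in\Gamma\}\vdash\psi\to\varphi$; ($\to$2) $\{\varphi\to\psi,\psi\to\chi\}\vdash\varphi\to\chi$; (Refl) $\{\varphi,\varphi\to\psi\}\vdash\psi$; (Tran) $\varphi\to\psi\vdash(\bot\to\bot)\to(\varphi\to\psi)$; (Sym1) $\Gamma\cup\{\psi\}\vdash\chi$ and $\Gamma\cup\{(\varphi\to\psi)\to\bot\}\vdash\chi\Rightarrow\Gamma\cup\{\varphi\}\vdash\chi$; (Sym2) $\{\alpha\wedge\psi\to\chi,\alpha\wedge((\varphi\to\psi)\to\bot)\to\chi\}\vdash\alpha\wedge\varphi\to\chi$; (Prop$^-$) $p\vdash((\bot\to\bot)\to\bot)\to p$; (Prop$_{tr}$) $p\vdash(\bot\to\bot)\to p$; (Prop$_{sy}$) $p\vdash((p\to\bot)\to\bot)\to p$. $\Gamma$ is $\vdash$-consistent iff $\Gamma\nvdash\varphi$ for some $\varphi$; $\vdash$-deduction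 closed iff $\Gamma\vdash\psi\Rightarrow\psi\in\Gamma$. For $n\ge2$, $\vdash$ satisfies $(\alpha,\{\beta_1,\dots,\beta_n\})$ iff (i) for all $\Gamma,\varphi$: if $\Gamma\cup\{\beta_i\}\vdash\varphi$ for all $i$ then $\Gamma\cup\{\alpha\}\vdash\varphi$, and (ii) for all $\varphi,\psi_1,\dots,\psi_n$: $\{\psi_i\wedge\beta_i\to\varphi:1\le i\le n\}\vdash\psi_1\wedge\dots\wedge\psi_n\wedge\alpha\to\varphi$. $\Gamma$ is $\vdash$-prime iff whenever $\vdash$ satisfies $(\alpha,\{\beta_1,\dots,\beta_n\})$ ($n\ge2$) and $\alpha\in\Gamma$, some $\beta_i\in\Gamma$. $\Gamma R_\to\Delta$ iff $\varphi\to\psi\in\Gamma$ and $\varphi\in\Delta$ imply $\psi\in\Delta$. Canonical model $\mathfrak M^c_\vdash=(W^c_\vdash,R^c_\vdash,V^c_\vdash)$: $W^c_\vdash$ the set of $\vdash$-consistent, deduction closed, prime subsets of $Form$; $R^c_\vdash=R_\to\cap(W^c_\vdash\times W^c_\vdash)$; $V^c_\vdash(p)=\{\Gamma\in W^c_\vdash:p\in\Gamma\}$. *)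

(* Defs.v *)
From Stdlib Require Import List.
Import ListNotations.

Inductive Form : Type :=
| Var : nat -> Form
| Bot : Form
| And : Form -> Form -> Form
| Imp : Form -> Form -> Form.

Definition FSet := Form -> Prop.
Definition Sqt := FSet -> Form -> Prop.

Definition sempty : FSet := fun _ => False.
Definition sing (a : Form) : FSet := fun x => x = a.
Definition pair (a b : Form) : FSet := fun x => x = a \/ x = b.
Definition sadd (G : FSet) (a : Form) : FSet := fun x => G x \/ x = a.
Definition sunion (G D : FSet) : FSet := fun x => G x \/ D x.
Definition ssub (G D : FSet) : Prop := forall x, G x -> D x.

Definition Top : Form := Imp Bot Bot.
Definition Neg (a : Form) : Form := Imp a Bot.

Section Rules.
Variable vd : Sqt.

Definition rA := forall G a, vd (sadd G a) a.
Definition rMon := forall G D a, ssub G D -> vd G a -> vd D a.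
Definition rCut := forall G D psi phi,
  vd (sadd G psi) phi -> vd D psi -> vd (sunion G D) phi.
Definition rCom := forall G phi, vd G phi ->
  exists l : list Form, (forall x, In x l -> G x) /\ vd (fun x => In x l) phi.
Definition rBot := forall phi, vd (sing Bot) phi.
Definition rAndI := forall phi psi, vd (pair phi psi) (And phi psi).
Definition rAndE := forall phi psi,
  vd (sing (And phi psi)) phi /\ vd (sing (And phi psi)) psi.
Definition rImp0 := forall phi, vd sempty (Imp phi phi).
Definition rImp1 := forall G phi psi, vd G phi ->
  vd (fun x => exists chi, G chi /\ x = Imp psi chi) (Imp psi phi).
Definition rImp2 := forall phi psi chi,
  vd (pair (Imp phi psi) (Imp psi chi)) (Imp phi chi).
Definition rRefl := forall phi psi, vd (pair phi (Imp phi psi)) psi.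
Definition rTran := forall phi psi,
  vd (sing (Imp phi psi)) (Imp Top (Imp phi psi)).
Definition rSym1 := forall G phi psi chi,
  vd (sadd G psi) chi -> vd (sadd G (Neg (Imp phi psi))) chi ->
  vd (sadd G phi) chi.
Definition rSym2 := forall alpha phi psi chi,
  vd (pair (Imp (And alpha psi) chi) (Imp (And alpha (Neg (Imp phi psi))) chi))
     (Imp (And alpha phi) chi).
Definition rPropMinus := forall p : nat,
  vd (sing (Var p)) (Imp (Neg Top) (Var p)).
Definition rPropTr := forall p : nat,
  vd (sing (Var p)) (Imp Top (Var p)).
Definition rPropSy := forall p : nat,
  vd (sing (Var p)) (Imp (Neg (Neg (Var p))) (Var p)).

Definition bigAnd (l : list Form) : Form :=
  match l with
  | [] => Top (* unused: only applied to lists of length >= 2 *)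
  | a :: r => fold_left And r a
  end.

Definition satisfies_pair (alpha : Form) (bs : list Form) : Prop :=
  2 <= length bs /\
  (forall G phi, (forall b, In b bs -> vd (sadd G b) phi) -> vd (sadd G alpha) phi) /\
  (forall phi (ps : list Form), length ps = length bs ->
     vd (fun x => exists i, i < length bs /\
            x = Imp (And (nth i ps Bot) (nth i bs Bot)) phi)
        (Imp (And (bigAnd ps) alpha) phi)).

Definition consistent (G : FSet) := exists phi, ~ vd G phi.
Definition ded_closed (G : FSet) := forall psi, vd G psi -> G psi.
Definition prime (G : FSet) := forall alpha bs,
  satisfies_pair alpha bs -> G alpha -> exists b, In b bs /\ G b.

Definition isWc (G : FSet) := consistent G /\ ded_closed G /\ prime G.

Definition Wc : Type := { G : FSet | isWc G }.
Definition Rto (G D : FSet) : Prop :=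
  forall phi psi, G (Imp phi psi) -> D phi -> D psi.
Definition Rc (x y : Wc) : Prop := Rto (proj1_sig x) (proj1_sig y).
Definition Vc (p : nat) (x : Wc) : Prop := proj1_sig x (Var p).

End Rules.

Section Models.
Variables (W : Type) (R : W -> W -> Prop) (V : nat -> W -> Prop).

Definition img (X : W -> Prop) : W -> Prop := fun t => exists s, X s /\ R s t.
Definition box (X : W -> Prop) : W -> Prop := fun s => forall t, R s t -> X t.

Definition is_proposition (X : W -> Prop) : Prop :=
  forall t, img X t -> box (img X) t -> X t.
Definition interpretation : Prop := forall p, is_proposition (V p).

Definition r_refl := forall x, R x x.
Definition r_sym := forall x y, R x y -> R y x.
Definition r_trans := forall x y z, R x y -> R y z -> R x z.

Definition D_Pminus : Prop :=
  forall p w, V p w -> box (fun t => ~ box (fun _ => False) t \/ V p t) w.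
Definition D_Bp : Prop := interpretation /\ r_sym.
Definition D_V : Prop := interpretation /\ r_trans.
Definition D_KB4p : Prop := interpretation /\ r_sym /\ r_trans.
Definition D_I : Prop := interpretation /\ r_refl /\ r_trans.
Definition D_O : Prop := interpretation /\ r_refl /\ r_sym.
Definition D_C : Prop := interpretation /\ r_refl /\ r_sym /\ r_trans.
End Models.

Definition basic_rules (vd : Sqt) : Prop :=
  rA vd /\ rMon vd /\ rCut vd /\ rCom vd /\ rBot vd /\ rAndI vd /\
  rAndE vd /\ rImp0 vd /\ rImp1 vd /\ rImp2 vd.

(* Main.v *)
Require Import Defs.
From Stdlib Require Import List Classical Lia Cantor.
Import ListNotations.

Section S.
Variable vd : Sqt.
Hypothesis Hb : basic_rules vd.

Lemma hA : rA vd. Proof. apply Hb. Qed.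
Lemma hMon : rMon vd. Proof. apply Hb. Qed.
Lemma hCut : rCut vd. Proof. apply Hb. Qed.
Lemma hCom : rCom vd. Proof. apply Hb. Qed.
Lemma hBot : rBot vd. Proof. apply Hb. Qed.
Lemma hAndI : rAndI vd. Proof. apply Hb. Qed.
Lemma hAndE : rAndE vd. Proof. apply Hb. Qed.
Lemma hImp0 : rImp0 vd. Proof. apply Hb. Qed.
Lemma hImp1 : rImp1 vd. Proof. apply Hb. Qed.
Lemma hImp2 : rImp2 vd. Proof. apply Hb. Qed.

Lemma ax G a : G a -> vd G a.
Proof.
  intro H. apply (hMon (sadd G a)). intros x [Hx| ->]; auto. apply hA.
Qed.

Lemma cut1 G psi phi : vd (sadd G psi) phi -> vd G psi -> vd G phi.
Proof.
  intros H1 H2. apply (hMon (sunion G G)). intros x [|]; auto.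
  eapply hCut; eauto.
Qed.

Lemma cut_list D : forall l a, (forall x, In x l -> vd D x) ->
  vd (fun x => D x \/ In x l) a -> vd D a.
Proof.
  induction l as [|c l IH]; intros a Hl H.
  - apply (hMon _ _ _ (fun x Hx => match Hx with or_introl h => h | or_intror h => False_ind _ h end) H).
  - apply IH. intros; apply Hl; simpl; auto.
    apply (cut1 _ c).
    + refine (hMon _ _ _ _ H). intros x Hx. destruct Hx as [h|[h|h]].
      left; left; auto. right; auto. left; right; auto.
    + apply (hMon D). intros x Hx; left; auto. apply Hl; simpl; auto.
Qed.

Lemma Gen G D a : vd G a -> (forall x, G x -> vd D x) -> vd D a.
Proof.
  intros H HD. destruct (hCom _ _ H) as [l [Hl Hv]].
  apply (cut_list D l). intros; auto.
  apply (hMon _ _ _ (fun x Hx => or_intror Hx) Hv).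
Qed.

Definition prov a := vd sempty a.
Lemma prov_vd G a : prov a -> vd G a.
Proof. intro H. apply (hMon sempty); auto. intros x []. Qed.

Lemma sing_der A B G : vd (sing A) B -> vd G A -> vd G B.
Proof. intros H1 H2. apply (Gen _ _ _ H1). intros x ->; auto. Qed.

Lemma pair_der A B C G : vd (pair A B) C -> vd G A -> vd G B -> vd G C.
Proof. intros H1 H2 H3. apply (Gen _ _ _ H1). intros x [->| ->]; auto. Qed.

Lemma andI G a b : vd G a -> vd G b -> vd G (And a b).
Proof. intros; apply (pair_der a b); auto. apply hAndI. Qed.
Lemma andE1 G a b : vd G (And a b) -> vd G a.
Proof. intros; apply (sing_der (And a b)); auto. apply hAndE. Qed.
Lemma andE2 G a b : vd G (And a b) -> vd G b.
Proof. intros; apply (sing_der (And a b)); auto. apply hAndE. Qed.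

Lemma imp_lift S D X a : vd S a -> (forall c, S c -> vd D (Imp X c)) -> vd D (Imp X a).
Proof.
  intros H HD. apply (Gen _ _ _ (hImp1 _ _ X H)).
  intros x [chi [Hc ->]]; auto.
Qed.

Lemma imp_of A B : vd (sing A) B -> prov (Imp A B).
Proof.
  intro H. apply (imp_lift _ _ _ _ H). intros c ->. apply hImp0.
Qed.

Lemma imp_tr G A B C : vd G (Imp A B) -> vd G (Imp B C) -> vd G (Imp A C).
Proof. intros; apply (pair_der (Imp A B) (Imp B C)); auto. apply hImp2. Qed.

Lemma top_prov G : vd G Top.
Proof. apply prov_vd, hImp0. Qed.

Lemma bot_all G a : vd G Bot -> vd G a.
Proof. intro; eapply sing_der; eauto. apply hBot. Qed.

Section Lind.
Variable Gm : FSet.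
Hypothesis Gclosed : ded_closed vd Gm.
Variable psi : Form.

Definition good (D : FSet) := forall X, vd D X -> ~ Gm (Imp X psi).

Lemma good_anti A B : ssub A B -> good B -> good A.
Proof. intros Hs Hg X HX. apply Hg. eapply hMon; eauto. Qed.

Lemma conj_list (D : FSet) b : forall l, (forall c, In c l -> D c \/ c = b) ->
  exists Y, vd D Y /\ forall c, In c l -> prov (Imp (And Y b) c).
Proof.
  induction l as [|c l IH]; intros Hl.
  - exists Top; split. apply top_prov. intros c [].
  - destruct IH as [Y [HY HYl]]. intros; apply Hl; simpl; auto.
    destruct (Hl c (or_introl eq_refl)) as [Hc| ->].
    + exists (And Y c); split. apply andI; auto. apply ax; auto.
      intros c' [<-|Hc'].
      * apply imp_of. apply andE2 with Y. apply andE1 with b. apply ax. reflexivity.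
      * apply imp_tr with (And Y b); [|apply HYl; exact Hc'].
        apply imp_of. apply andI.
        apply andE1 with c. apply andE1 with b. apply ax; reflexivity.
        apply andE2 with (And Y c). apply ax; reflexivity.
    + exists Y; split; auto. intros c' [<-|Hc']; auto.
      apply imp_of. apply andE2 with Y. apply ax; reflexivity.
Qed.

Lemma bad_ext D b : ~ good (sadd D b) ->
  exists Y, vd D Y /\ Gm (Imp (And Y b) psi).
Proof.
  intro H. apply NNPP; intro Hn. apply H. intros X HX HG.
  destruct (hCom _ _ HX) as [l [Hl Hv]].
  destruct (conj_list D b l) as [Y [HY HYl]]. intros c Hc. apply Hl; auto.
  apply Hn. exists Y; split; auto. apply Gclosed.
  apply imp_tr with X; [|apply ax; auto].
  apply (imp_lift _ _ _ _ Hv). intros c Hc. apply prov_vd; auto.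
Qed.

Variable D : FSet.
Hypothesis Dgood : good D.
Hypothesis Dmax : forall chi, good (sadd D chi) -> D chi.

Lemma D_R : Rto Gm D.
Proof.
  intros a b Hab Ha. apply NNPP; intro Hnb.
  destruct (bad_ext D b) as [Y [HY HG]]. intro Hg; apply Hnb, Dmax, Hg.
  apply (Dgood (And Y a)). apply andI; auto. apply ax; auto.
  apply Gclosed. apply imp_tr with (And Y b); [|apply ax; auto].
  apply (imp_lift (pair Y b)). apply hAndI.
  intros c [->| ->]. apply prov_vd, imp_of, andE1 with a, ax; reflexivity.
  apply imp_tr with a. apply prov_vd, imp_of, andE2 with Y, ax; reflexivity.
  apply ax; auto.
Qed.

Lemma D_cons : consistent vd D.
Proof.
  exists psi. intro H. apply (Dgood psi H). apply Gclosed, prov_vd, hImp0.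
Qed.

Lemma D_closed : ded_closed vd D.
Proof.
  intros chi H. apply Dmax. intros X HX. apply Dgood. eapply cut1; eauto.
Qed.

Lemma choose_ps (P : Form -> Form -> Prop) : forall bs,
  (forall b, In b bs -> exists Y, P Y b) ->
  exists ps, length ps = length bs /\
    forall i, i < length bs -> P (nth i ps Bot) (nth i bs Bot).
Proof.
  induction bs as [|b bs IH]; intros H.
  - exists []; split; auto. simpl; intros; lia.
  - destruct IH as [ps [Hl Hp]]. intros; apply H; simpl; auto.
    destruct (H b (or_introl eq_refl)) as [Y HY].
    exists (Y :: ps); split. simpl; auto.
    intros [|i] Hi; simpl; auto. apply Hp. simpl in Hi; lia.
Qed.

Lemma fold_der G : forall r a, vd G a -> (forall x, In x r -> vd G x) ->
  vd G (fold_left And r a).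
Proof.
  induction r as [|c r IH]; intros a Ha Hr; simpl; auto.
  apply IH. apply andI; auto. apply Hr; simpl; auto.
  intros; apply Hr; simpl; auto.
Qed.

Lemma bigAnd_der G ps : (forall x, In x ps -> vd G x) -> vd G (bigAnd ps).
Proof.
  destruct ps as [|a r]; intros H; simpl. apply top_prov.
  apply fold_der. apply H; simpl; auto. intros; apply H; simpl; auto.
Qed.

Lemma D_prime : prime vd D.
Proof.
  intros a bs [Hlen [Hi Hii]] Ha. apply NNPP; intro Hn.
  assert (Hb' : forall b, In b bs -> exists Y, vd D Y /\ Gm (Imp (And Y b) psi)).
  { intros b Hb0. apply bad_ext. intro Hg. apply Hn. exists b; split; auto. }
  destruct (choose_ps (fun Y b => vd D Y /\ Gm (Imp (And Y b) psi)) bs Hb')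
    as [ps [Hl Hp]].
  apply (Dgood (And (bigAnd ps) a)).
  - apply andI; [|apply ax; auto]. apply bigAnd_der.
    intros x Hx. destruct (In_nth _ _ Bot Hx) as [i [Hi' <-]].
    apply Hp. lia.
  - apply Gclosed. apply (Gen _ _ _ (Hii psi ps Hl)).
    intros x [i [Hi' ->]]. apply ax. apply Hp; auto.
Qed.

End Lind.

Fixpoint enc (f : Form) : nat :=
  match f with
  | Var n => to_nat (1, n)
  | Bot => to_nat (0, 0)
  | And a b => to_nat (2, to_nat (enc a, enc b))
  | Imp a b => to_nat (3, to_nat (enc a, enc b))
  end.

Lemma to_nat_inj p q : to_nat p = to_nat q -> p = q.
Proof. intro H. rewrite <- (cancel_of_to p), <- (cancel_of_to q), H; auto. Qed.

Lemma enc_inj : forall f g, enc f = enc g -> f = g.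
Proof.
  induction f; destruct g; cbn [enc]; intro H; apply to_nat_inj in H;
    try discriminate; auto;
    try (injection H as H'; subst; auto; fail).
  - pose proof (f_equal snd H) as H'; cbn [snd] in H'. apply to_nat_inj in H'.
    pose proof (f_equal fst H') as E1; pose proof (f_equal snd H') as E2; cbn in E1, E2. f_equal; auto.
  - pose proof (f_equal snd H) as H'; cbn [snd] in H'. apply to_nat_inj in H'.
    pose proof (f_equal fst H') as E1; pose proof (f_equal snd H') as E2; cbn in E1, E2. f_equal; auto.
Qed.

Section Ext.
Variable Gm : FSet.
Variable psi : Form.
Variable D0 : FSet.

Fixpoint stage (n : nat) : FSet :=
  match n with
  | 0 => D0
  | S n => fun x => stage n x \/ (enc x = n /\ good Gm psi (sadd (stage n) x))
  end.

Definition Lim : FSet := fun x => exists n, stage n x.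

Hypothesis D0good : good Gm psi D0.

Lemma stage_good n : good Gm psi (stage n).
Proof.
  induction n; simpl; auto.
  destruct (classic (exists x, enc x = n /\ good Gm psi (sadd (stage n) x))) as [[x0 [He Hg]]|Hno].
  - eapply good_anti; [|exact Hg]. intros x [Hx|[Hx _]]; [left; auto|right].
    apply enc_inj; congruence.
  - eapply good_anti; [|exact IHn]. intros x [Hx|Hx]; auto. exfalso; apply Hno; eauto.
Qed.

Lemma stage_mono n m : n <= m -> ssub (stage n) (stage m).
Proof.
  induction 1; intros x Hx; auto. simpl; left; auto.
Qed.

Lemma list_stage l : (forall x, In x l -> Lim x) -> exists N, forall x, In x l -> stage N x.
Proof.
  induction l as [|c l IH]; intros H.
  - exists 0; intros x [].
  - destruct IH as [N HN]. intros; apply H; simpl; auto.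
    destruct (H c (or_introl eq_refl)) as [k Hk].
    exists (N + k). intros x [<-|Hx].
    apply (stage_mono k); auto; lia. apply (stage_mono N); auto; lia.
Qed.

Lemma Lim_good : good Gm psi Lim.
Proof.
  intros X HX. destruct (hCom _ _ HX) as [l [Hl Hv]].
  destruct (list_stage l Hl) as [N HN].
  apply (stage_good N). eapply hMon; eauto. intros x Hx; auto.
Qed.

Lemma Lim_max chi : good Gm psi (sadd Lim chi) -> Lim chi.
Proof.
  intro H. exists (S (enc chi)). simpl. right; split; auto.
  eapply good_anti; [|exact H]. intros x [Hx| ->]; [left; exists (enc chi); auto|right; auto].
Qed.

Lemma D0_Lim : ssub D0 Lim.
Proof. intros x Hx; exists 0; auto. Qed.
End Ext.

Lemma successor (Gm : FSet) (Hc : ded_closed vd Gm) phi psi :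
  ~ Gm (Imp phi psi) ->
  exists D : Wc vd, Rto Gm (proj1_sig D) /\ proj1_sig D phi /\ ~ proj1_sig D psi.
Proof.
  intro H.
  assert (Hg0 : good Gm psi (sing phi)).
  { intros X HX HG. apply H. apply Hc. apply imp_tr with X; [|apply ax; auto].
    apply prov_vd, imp_of; auto. }
  pose (L := Lim Gm psi (sing phi)).
  assert (Lg : good Gm psi L) by (apply Lim_good; auto).
  assert (Lm : forall chi, good Gm psi (sadd L chi) -> L chi) by (apply Lim_max).
  assert (HW : isWc vd L).
  { split; [|split]. apply (D_cons Gm Hc psi); auto.
    apply (D_closed Gm psi); auto. apply (D_prime Gm Hc psi); auto. }
  exists (exist _ L HW); simpl. split; [|split].
  - apply (D_R Gm Hc psi); auto.
  - apply D0_Lim; reflexivity.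
  - intro Hp. apply (Lg psi (ax _ _ Hp)). apply Hc, prov_vd, hImp0.
Qed.

Lemma W_closed (w : Wc vd) a : vd (proj1_sig w) a -> proj1_sig w a.
Proof. apply (proj1 (proj2 (proj2_sig w))). Qed.

Lemma W_nobot (w : Wc vd) : ~ proj1_sig w Bot.
Proof.
  destruct (proj1 (proj2_sig w)) as [phi Hphi]; intro H. apply Hphi, bot_all, ax, H.
Qed.

Lemma W_prov (w : Wc vd) a : prov a -> proj1_sig w a.
Proof. intro; apply W_closed, prov_vd; auto. Qed.

Lemma W_sing (w : Wc vd) a b : vd (sing a) b -> proj1_sig w a -> proj1_sig w b.
Proof. intros H Ha; apply W_closed. eapply sing_der; eauto. apply ax; auto. Qed.

Lemma W_Top (w : Wc vd) : proj1_sig w Top.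
Proof. apply W_prov, hImp0. Qed.

Lemma refl_R : rRefl vd -> r_refl (Wc vd) (Rc vd).
Proof.
  intros Hr w a b Hab Ha. apply W_closed. apply (pair_der a (Imp a b)). apply Hr.
  apply ax; auto. apply ax; auto.
Qed.

Lemma trans_R : rTran vd -> r_trans (Wc vd) (Rc vd).
Proof.
  intros Ht x y z Hxy Hyz a b Hab Ha.
  apply (Hyz a); auto. apply (Hxy Top); [|apply W_Top].
  apply (W_sing x (Imp a b)); [apply Ht|exact Hab].
Qed.

Lemma sym_R : rSym1 vd -> rSym2 vd -> r_sym (Wc vd) (Rc vd).
Proof.
  intros H1 H2 x y Hxy a b Hab Ha.
  unfold Rc, Rto in *. destruct (proj2_sig x) as [Gc [Gcl Gpr]].
  destruct (Gpr a [b; Neg (Imp a b)]) as [c [Hc HGc]]; auto.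
  - split; [simpl; lia|split].
    + intros G0 phi Hb0. apply (H1 G0 a b phi). apply Hb0; simpl; auto. apply Hb0; simpl; auto.
    + intros phi ps Hl. destruct ps as [|p1 [|p2 [|p3 ps]]]; simpl in Hl; try discriminate.
      simpl.
      set (S0 := fun x => exists i, i < 2 /\ x = Imp (And (nth i [p1;p2] Bot) (nth i [b; Neg (Imp a b)] Bot)) phi).
      assert (HS : forall i, i < 2 -> vd S0 (Imp (And (nth i [p1;p2] Bot) (nth i [b; Neg (Imp a b)] Bot)) phi)).
      { intros i Hi; apply ax; exists i; auto. }
      assert (Hw : forall q r s, prov (Imp (And (And p1 p2) q) (And r q)) -> vd S0 (Imp (And r q) s) -> vd S0 (Imp (And (And p1 p2) q) s)).
      { intros q r s Hp Hs. apply imp_tr with (And r q); auto. apply prov_vd; auto. }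
      eapply pair_der. apply H2.
      * apply Hw with (r := p1). 2: apply (HS 0); lia.
        apply imp_of. apply andI. apply andE1 with p2, andE1 with b, ax; reflexivity.
        apply andE2 with (And p1 p2), ax; reflexivity.
      * apply Hw with (r := p2). 2: apply (HS 1); lia.
        apply imp_of. apply andI. apply andE2 with p1, andE1 with (Neg (Imp a b)), ax; reflexivity.
        apply andE2 with (And p1 p2), ax; reflexivity.
  - destruct Hc as [<-|[<-|[]]]; auto. exfalso.
    apply (W_nobot y). apply (Hxy (Imp a b)); auto.
Qed.

Lemma interp_tr : rPropTr vd -> interpretation (Wc vd) (Rc vd) (Vc vd).
Proof.
  intros Hp p t [s [Hs Hst]] _. unfold Vc in *.
  apply (Hst Top); [|apply W_Top]. apply (W_sing s (Var p)); [apply Hp|exact Hs].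
Qed.

Lemma interp_sy : rSym1 vd -> rSym2 vd -> rPropSy vd ->
  interpretation (Wc vd) (Rc vd) (Vc vd).
Proof.
  intros H1 H2 Hp p t [s [Hs Hst]] Hbox. unfold Vc in *.
  apply NNPP; intro Hnt.
  assert (Hnn : ~ proj1_sig t (Imp (Neg (Var p)) Bot)).
  { intro Hn. apply Hnt. apply (Hst (Neg (Neg (Var p)))); auto.
    apply (W_sing s (Var p)); [apply Hp|exact Hs]. }
  destruct t as [G [Gc [Gcl Gpr]]]; simpl in *.
  destruct (successor G Gcl _ _ Hnn) as [th [HR [Hth Hbot]]].
  destruct (Hbox th HR) as [d [Hd Hdt]].
  pose proof (sym_R H1 H2 _ _ Hdt) as Htd.
  apply (W_nobot d). apply (Htd (Var p)); auto.
Qed.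

Lemma pminus : rPropMinus vd -> D_Pminus (Wc vd) (Rc vd) (Vc vd).
Proof.
  intros Hp p w Hw t Hwt. unfold Vc in *.
  destruct (classic (box (Wc vd) (Rc vd) (fun _ => False) t)) as [Hb0|Hb0]; auto.
  right. apply (Hwt (Neg Top)). apply (W_sing w (Var p)); [apply Hp|exact Hw].
  apply NNPP; intro Hn.
  destruct t as [G [Gc [Gcl Gpr]]]; simpl in *.
  destruct (successor G Gcl _ _ Hn) as [th [HR _]].
  apply (Hb0 th HR).
Qed.

End S.

Theorem mainTheorem14 (vd : Sqt) (Hbasic : basic_rules vd) :
  (rPropMinus vd -> D_Pminus (Wc vd) (Rc vd) (Vc vd)) /\
  (rTran vd -> rPropTr vd -> D_V (Wc vd) (Rc vd) (Vc vd)) /\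
  (rSym1 vd -> rSym2 vd -> rPropSy vd -> D_Bp (Wc vd) (Rc vd) (Vc vd)) /\
  (rRefl vd -> rSym1 vd -> rSym2 vd -> rPropSy vd -> D_O (Wc vd) (Rc vd) (Vc vd)) /\
  (rTran vd -> rSym1 vd -> rSym2 vd -> rPropTr vd -> D_KB4p (Wc vd) (Rc vd) (Vc vd)) /\
  (rRefl vd -> rTran vd -> rPropTr vd -> D_I (Wc vd) (Rc vd) (Vc vd)) /\
  (rRefl vd -> rSym1 vd -> rSym2 vd -> rTran vd -> rPropTr vd ->
     D_C (Wc vd) (Rc vd) (Vc vd)).
Proof.
  split; [|split; [|split; [|split; [|split; [|split]]]]]; intros.
  - apply pminus; auto.
  - split; [apply interp_tr|apply trans_R]; auto.
  - split; [apply interp_sy|apply sym_R]; auto.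
  - split; [apply interp_sy|split; [apply refl_R|apply sym_R]]; auto.
  - split; [apply interp_tr|split; [apply sym_R|apply trans_R]]; auto.
  - split; [apply interp_tr|split; [apply refl_R|apply trans_R]]; auto.
  - split; [apply interp_tr|split; [apply refl_R|split; [apply sym_R|apply trans_R]]]; auto.
Qed.
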